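(* Let $G$ be a connected graph and let $e=uv\in E(G)$ be an edge with $\min\{\deg_G(u),\deg_G(v)\}\geq 2$. Let $G'$ be the graph obtained from $G$ by applying Operation 1 to $e$, i.e. deleting the edge $uv$ and adding two new vertices $u_e,v_e$ together with the edges $uu_e$ and $vv_e$ (so $\deg_{G'}(u_e)=\deg_{G'}(v_e)=1$). Then $rc(L(G))\leq rc(L(G'))$.
   Context: All graphs are simple, finite and undirected. $L(H)$ denotes the line graph of $H$: its vertex set is $E(H)$, two vertices being adjacent iff the corresponding edges share an end. For an edge-colouring of a graph (adjacent edges may receive the same colour), a path is rainbow if no two of its edges have the same colour; the graph is rainbow connected if every two vertices are joined by a rainbow path. The rainbow connection number $rc(H)$ of a connected graph $H$ is the smallest number of colours in an edge-colouring making $H$ rainbow connected (if $H$ is disconnected, $rc(H)$ is taken to be $\infty$). *)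

(* Defs.v *)
From mathcomp Require Import all_boot.
From mathcomp Require Import boolp.

Set Implicit Arguments.
Unset Strict Implicit.
Unset Printing Implicit Defensive.

Definition simple_graph (T : finType) (g : rel T) : Prop :=
  symmetric g /\ irreflexive g.

Definition connected_graph (T : finType) (g : rel T) : Prop :=
  forall x y : T, connect g x y.

Definition deg (T : finType) (g : rel T) (x : T) : nat := #|[set y | g x y]|.

Definition is_edge (T : finType) (g : rel T) (A : {set T}) : bool :=
  [exists x, exists y, g x y && (A == [set x; y])].

Definition line_vertex (T : finType) (g : rel T) := {A : {set T} | is_edge g A}.

Definition line_graph (T : finType) (g : rel T) : rel (line_vertex g) :=
  fun A B => (A != B) && (val A :&: val B != set0).
Arguments line_graph {T} g.

(* Rainbow connection. A colouring with k colours assigns a colour to each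
   unordered pair {a, b} (only pairs that are edges matter). *)
Definition rainbow_path (V : finType) (h : rel V) (k : nat)
    (c : {set V} -> 'I_k) (x : V) (p : seq V) : bool :=
  [&& path h x p, uniq (x :: p) & uniq (pairmap (fun a b => c [set a; b]) x p)].

Definition rainbow_connected (V : finType) (h : rel V) (k : nat)
    (c : {set V} -> 'I_k) : Prop :=
  forall x y : V, exists p : seq V, rainbow_path h c x p /\ last x p = y.

Definition rc_colourable (V : finType) (h : rel V) (k : nat) : Prop :=
  exists c : {set V} -> 'I_k, rainbow_connected h c.

Lemma rc_ex_bool (V : finType) (h : rel V) :
  (exists k, rc_colourable h k) -> exists k, `[< rc_colourable h k >].
Proof. by case=> k Hk; exists k; apply/asboolP. Qed.

(* rc H : None encodes infinity (no colouring works, e.g. H disconnected),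
   Some k is the least number of colours making H rainbow connected. *)
Definition rc (V : finType) (h : rel V) : option nat :=
  match pselect (exists k, rc_colourable h k) with
  | left P => Some (ex_minn (rc_ex_bool P))
  | right _ => None
  end.

Definition ext_le (a b : option nat) : bool :=
  match a, b with
  | _, None => true
  | Some m, Some n => m <= n
  | None, Some _ => false
  end.

(* Operation 1 on edge uv: delete uv, add new vertices u_e := inr false and
   v_e := inr true with edges u u_e and v v_e. Vertex type T + bool. *)
Definition operation1 (T : finType) (g : rel T) (u v : T) : rel (T + bool) :=
  fun a b =>
    match a, b with
    | inl x, inl y => g x y && ~~ (((x == u) && (y == v)) || ((x == v) && (y == u)))
    | inl x, inr false => x == u
    | inr false, inl x => x == u
    | inl x, inr true => x == v
    | inr true, inl x => x == v
    | inr _, inr _ => false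
    end.

(* Main.v *)
Require Import Defs.
From mathcomp Require Import all_boot.
From mathcomp Require Import boolp.
Set Implicit Arguments. Unset Strict Implicit. Unset Printing Implicit Defensive.

Lemma split_mem (X : eqType) (x : X) (q : seq X) : x \in q ->
  exists s1 s2, q = s1 ++ x :: s2.
Proof. by case/splitPr=> s1 s2; exists s1, s2. Qed.

Section Shortcut.
Variables (V : finType) (h : rel V) (k : nat) (c : {set V} -> 'I_k).
Local Notation col := (fun a b => c [set a; b]).

Lemma shortcut x p : path h x p -> uniq (pairmap col x p) ->
  exists p', [/\ path h x p', uniq (x :: p'), uniq (pairmap col x p'),
     {subset pairmap col x p' <= pairmap col x p} & last x p' = last x p].
Proof.
elim: p x => [|y p IH] x /=.
  by move=> _ _; exists [::]; split.
move=> /andP[hxy pp] /andP[nin up].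
have [p' [pp' up' cp' sp' lp']] := IH y pp up.
have [xin|xnin] := boolP (x \in y :: p').
- have [s1 [s2 E]] := split_mem xin.
  case: s1 E => [|z s1] /= [Ey Ep].
    subst y p'; exists s2; split => //.
    by move=> w /sp' wi; rewrite inE wi orbT.
  subst z p'; exists s2; split.
  + by move: pp'; rewrite cat_path /= => /and3P[].
  + by move: up'; rewrite cons_uniq cat_uniq /= => /andP[_ /and3P[_ _ /andP[-> ->]]].
  + by move: cp'; rewrite pairmap_cat cat_uniq /= => /and3P[_ _ /andP[]].
  + move=> w wi; rewrite inE; apply/orP; right; apply: sp'.
    by rewrite pairmap_cat mem_cat /= inE wi !orbT.
  + by rewrite -lp' last_cat.
- exists (y :: p'); split => /=.
  + by rewrite hxy.
  + by rewrite xnin.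
  + by rewrite cp' andbT; apply: contra nin; apply: sp'.
  + by move=> w; rewrite !inE => /orP[->//|/sp' ->]; rewrite orbT.
  + by [].
Qed.
End Shortcut.

Lemma mem2 (X : finType) (x y z w : X) : z != w -> z \in [set x; y] -> w \in [set x; y] ->
  (x == z) && (y == w) || (x == w) && (y == z).
move=> nzw /set2P[] Ez /set2P[] Ew; subst; rewrite ?eqxx ?orbT ?andbT //; by rewrite eqxx in nzw.
Qed.

Lemma edgeI (X : finType) (r : rel X) x y : r x y -> is_edge r [set x; y].
Proof. by move=> rxy; apply/existsP; exists x; apply/existsP; exists y; rewrite rxy eqxx. Qed.

Section Main.
Variables (T : finType) (g : rel T) (u v : T).
Hypotheses (gs : symmetric g) (gi : irreflexive g) (guv : g u v).
Local Notation g' := (operation1 g u v).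
Local Notation LG := (line_vertex g).
Local Notation LG' := (line_vertex g').

Lemma uv_neq : u != v. Proof. by apply: contraTneq guv => ->; rewrite gi. Qed.

Definition eE : LG := exist _ [set u; v] (edgeI guv).
Definition aE : LG' := exist _ [set inl u; inr false] (@edgeI _ g' (inl u) (inr false) (eqxx u)).
Definition bE : LG' := exist _ [set inl v; inr true] (@edgeI _ g' (inl v) (inr true) (eqxx v)).
Definition iota (A : LG) : LG' := insubd aE (inl @: val A).
Definition phi (A' : LG') : LG := insubd eE (inl @^-1: val A').

Lemma edge'_char (A' : LG') :
  A' = aE \/ A' = bE \/ exists x y, [/\ g x y,
    ~~ ((x == u) && (y == v) || (x == v) && (y == u)) & val A' = [set inl x; inl y]].
Proof.
case: A' => A HA; have /existsP[x /existsP[y /andP[gxy /eqP EA]]] := HA.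
case: x y gxy EA => [x|[]] [y|[]] /= gxy EA.
- by right; right; exists x, y; case/andP: gxy.
- by right; left; apply: val_inj; rewrite /= EA (eqP gxy).
- by left; apply: val_inj; rewrite /= EA (eqP gxy).
- by right; left; apply: val_inj; rewrite /= EA (eqP gxy) setUC.
- by [].
- by [].
- by left; apply: val_inj; rewrite /= EA (eqP gxy) setUC.
- by [].
- by [].
Qed.

Lemma not_edge1 z : ~~ is_edge g [set z].
Proof.
apply/negP => /existsP[x /existsP[y /andP[gxy /eqP E]]].
have : x \in [set z] by rewrite E !inE eqxx.
have : y \in [set z] by rewrite E !inE eqxx orbT.
by rewrite !inE => /eqP Ey /eqP Ex; subst; rewrite gi in gxy.
Qed.

Lemma phi_a : phi aE = eE.
Proof.
apply: val_inj; rewrite val_insubd.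
have -> : inl @^-1: [set inl u; inr false] = [set u] :> {set T}.
  by apply/setP => z; rewrite !inE /= orbF.
by case: ifP => // H; move: (not_edge1 u); rewrite H.
Qed.

Lemma phi_b : phi bE = eE.
Proof.
apply: val_inj; rewrite val_insubd.
have -> : inl @^-1: [set inl v; inr true] = [set v] :> {set T}.
  by apply/setP => z; rewrite !inE /= orbF.
by case: ifP => // H; move: (not_edge1 v); rewrite H.
Qed.

Lemma pre2 (x y : T) : @inl T bool @^-1: [set inl x; inl y] = [set x; y].
Proof. by apply/setP => z; rewrite !inE /=. Qed.

Lemma img2 (x y : T) : @inl T bool @: [set x; y] = [set inl x; inl y].
Proof. by rewrite imsetU1 imset_set1. Qed.

Lemma phi_inl (A' : LG') x y : g x y ->
  ~~ ((x == u) && (y == v) || (x == v) && (y == u)) -> val A' = [set inl x; inl y] ->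
  [/\ val (phi A') = [set x; y], phi A' != eE & iota (phi A') = A'].
Proof.
move=> gxy nc EA.
have Ev : val (phi A') = [set x; y].
  by rewrite val_insubd EA pre2 (edgeI gxy).
split => //.
  apply/eqP => E; move: nc; rewrite (mem2 uv_neq) //.
    by rewrite -Ev E !inE eqxx.
  by rewrite -Ev E !inE eqxx orbT.
apply: val_inj; rewrite val_insubd Ev img2 -EA.
by rewrite (valP A').
Qed.

Definition ab (A' : LG') := (A' == aE) || (A' == bE).

Lemma phi_e (A' : LG') : (phi A' == eE) = ab A'.
Proof.
rewrite /ab; have [->|[->|[x [y [gxy nc EA]]]]] := edge'_char A'.
- by rewrite phi_a !eqxx.
- by rewrite phi_b !eqxx orbT.
have [_ /negbTE -> _] := phi_inl gxy nc EA.
apply/esym/negbTE; rewrite negb_or; apply/andP; split; apply/eqP => E;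
  move: EA; rewrite E /= => /setP.
- by move=> /(_ (inr false)); rewrite !inE /= eqxx.
- by move=> /(_ (inr true)); rewrite !inE /= eqxx.
Qed.

Lemma iota_phi (A' : LG') : ~~ ab A' -> iota (phi A') = A'.
Proof.
rewrite /ab; have [->|[->|[x [y [gxy nc EA]]]]] := edge'_char A'.
- by rewrite eqxx.
- by rewrite eqxx orbT.
by have [_ _ ->] := phi_inl gxy nc EA.
Qed.

Lemma inl_mem (A' : LG') z : inl z \in val A' -> z \in val (phi A').
Proof.
have [->|[->|[x [y [gxy nc EA]]]]] := edge'_char A'.
- by rewrite phi_a !inE /= orbF => /eqP [] ->; rewrite eqxx.
- by rewrite phi_b !inE /= orbF => /eqP [] ->; rewrite eqxx orbT.
have [-> _ _] := phi_inl gxy nc EA.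
by rewrite EA !inE /=.
Qed.

Lemma inr_mem (A' : LG') bo : inr bo \in val A' -> A' = if bo then bE else aE.
Proof.
have [->|[->|[x [y [gxy nc EA]]]]] := edge'_char A'.
- by case: bo; rewrite !inE /=.
- by case: bo; rewrite !inE /=.
by rewrite EA !inE /=.
Qed.

Lemma adj_common (A' B' : LG') : line_graph g' A' B' ->
  exists z, inl z \in val A' /\ inl z \in val B'.
Proof.
move=> /andP[neq /set0Pn [[z|bo]]]; rewrite inE => /andP[wa wb].
  by exists z.
by move: neq; rewrite (inr_mem wa) (inr_mem wb) eqxx.
Qed.

Lemma ab_nocommon z : inl z \in val aE -> inl z \in val bE -> False.
Proof.
rewrite !inE /= !orbF => /eqP [] Eu /eqP [] Ev; subst z.
by move: uv_neq; rewrite Ev eqxx.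
Qed.

Lemma adj_phi (A' B' : LG') : line_graph g' A' B' -> line_graph g (phi A') (phi B').
Proof.
move=> adj; have [z [za zb]] := adj_common adj.
apply/andP; split; last by apply/set0Pn; exists z; rewrite inE !inl_mem.
case/andP: adj => neq _.
apply/eqP => E.
have [abA|nabA] := boolP (ab A').
  have abB : ab B' by rewrite -phi_e -E phi_e.
  move: abA abB neq za zb; rewrite /ab.
  by case/orP=> /eqP -> /orP[] /eqP -> //; rewrite ?eqxx // => _ za zb;
    [apply: (@ab_nocommon z) | apply: (@ab_nocommon z)].
have nabB : ~~ ab B' by rewrite -phi_e -E phi_e.
by move: neq; rewrite -(iota_phi nabA) -(iota_phi nabB) E eqxx.
Qed.

Definition chi (S : {set LG}) (x : LG) : LG' :=
  if x == eE then (if [exists y in S, (y != eE) && (u \in val y)] then aE else bE)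
  else iota x.

Definition colG (k : nat) (c' : {set LG'} -> 'I_k) (S : {set LG}) : 'I_k :=
  c' [set chi S z | z in S].

Lemma chi_ok (A' B' : LG') : line_graph g' A' B' -> chi [set phi A'; phi B'] (phi A') = A'.
Proof.
move=> adj; have [z [za zb]] := adj_common adj.
case/andP: adj => neq _.
rewrite /chi phi_e; case: (boolP (ab A')) => abA; last by rewrite iota_phi.
case/orP: abA => /eqP EA; subst A'.
- move: (za); rewrite !inE /= orbF => /eqP [] Ez; subst z.
  have nabB : ~~ ab B'.
    rewrite /ab negb_or eq_sym neq /=; apply/eqP => EB; subst B'.
    exact: (ab_nocommon za zb).
  rewrite ifT //; apply/existsP; exists (phi B').
  by rewrite !inE eqxx orbT phi_e nabB inl_mem.
- move: (za); rewrite !inE /= orbF => /eqP [] Ez; subst z.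
  have nabB : ~~ ab B'.
    rewrite /ab negb_or [B' == bE]eq_sym neq andbT; apply/eqP => EB; subst B'.
    exact: (ab_nocommon zb za).
  rewrite ifF //; apply/negbTE/existsP => [[y0 /andP[yS /andP[ye uy]]]].
  move: yS; rewrite !inE phi_b (negbTE ye) /= => /eqP Ey; subst y0.
  have [EB|[EB|[x [y [gxy nc EA]]]]] := edge'_char B'.
  + by rewrite EB /ab eqxx in nabB.
  + by rewrite EB /ab eqxx orbT in nabB.
  have [Ev _ _] := phi_inl gxy nc EA.
  move: zb; rewrite EA !inE /= => vi.
  rewrite Ev in uy.
  by move: nc; rewrite (mem2 uv_neq) // !inE.
Qed.

Lemma line_sym (X : finType) (r : rel X) : symmetric (line_graph r).
Proof. by move=> A B; rewrite /line_graph eq_sym setIC. Qed.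

Lemma col_ok k (c' : {set LG'} -> 'I_k) (A' B' : LG') : line_graph g' A' B' ->
  colG c' [set phi A'; phi B'] = c' [set A'; B'].
Proof.
move=> adj; rewrite /colG imsetU1 imset_set1 chi_ok //.
by rewrite [[set phi A'; phi B']]setUC chi_ok // line_sym.
Qed.

Lemma map_walk k (c' : {set LG'} -> 'I_k) x' p' : path (line_graph g') x' p' ->
  path (line_graph g) (phi x') (map phi p') /\
  pairmap (fun a b => colG c' [set a; b]) (phi x') (map phi p') =
  pairmap (fun a b => c' [set a; b]) x' p'.
Proof.
elim: p' x' => [|y p IH] x' //= /andP[adj pp].
have [P C] := IH y pp.
by rewrite adj_phi // P C col_ok.
Qed.

Definition pre (x : LG) : LG' := if x == eE then aE else iota x.

Lemma pre_ok (x : LG) : phi (pre x) = x.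
Proof.
rewrite /pre; case: eqP => [->|ne]; first exact: phi_a.
case: x ne => A HA ne.
have /existsP[p /existsP[q /andP[gpq /eqP EA]]] := HA.
have nc : ~~ ((p == u) && (q == v) || (p == v) && (q == u)).
  apply/negP => /orP[] /andP[/eqP Ep /eqP Eq]; subst p q; apply: ne;
    apply: val_inj => //=; by rewrite EA setUC.
have E' : val (iota (exist _ A HA)) = [set inl p; inl q].
  rewrite val_insubd /= EA img2.
  by rewrite (@edgeI _ g' (inl p) (inl q)) //= gpq nc.
have [Ev _ _] := phi_inl gpq nc E'.
by apply: val_inj; rewrite Ev /= EA.
Qed.

Lemma colourable_trans k : rc_colourable (line_graph g') k -> rc_colourable (line_graph g) k.
Proof.
case=> c' Hc'; exists (colG c') => x y.
have [p' [/and3P[pp up cp] lp]] := Hc' (pre x) (pre y).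
have [P C] := map_walk c' pp.
rewrite pre_ok in P C.
rewrite -C in cp.
have [p'' [P2 U2 C2 _ L2]] := shortcut P cp.
exists p''; split; first by rewrite /rainbow_path P2 U2 C2.
by rewrite L2 -{1}(pre_ok x) last_map lp pre_ok.
Qed.
End Main.

Theorem mainTheorem1 (T : finType) (g : rel T) (u v : T) :
  simple_graph g -> connected_graph g -> g u v ->
  2 <= minn (deg g u) (deg g v) ->
  ext_le (rc (line_graph g)) (rc (line_graph (operation1 g u v))).
Proof.
move=> [gs gi] _ guv _.
rewrite /rc.
destruct (pselect (exists k, rc_colourable (line_graph (operation1 g u v)) k)) as [P2|N2];
  last by case: pselect.
case: (ex_minnP (rc_ex_bool P2)) => m /asboolP Hm _.
have H1 := colourable_trans gi guv Hm.
destruct (pselect (exists k, rc_colourable (line_graph g) k)) as [P1|N1];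
  last by exfalso; apply: N1; exists m.
case: (ex_minnP (rc_ex_bool P1)) => m1 _ min1 /=.
by apply: min1; apply/asboolP.
Qed.
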